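(* Let $\lambda\in\mathbb{R}\setminus\{0\}$, $k\in\mathbb{Z}$, $u\in\mathbb{C}$ with $u\neq 1$, and $x\in\mathbb{R}$. Then for every integer $n\geq 0$, \[ \sum_{m=0}^{n}\binom{n}{m}FG_{m,\lambda}^{(k)}(x,u)\,(1)_{n-m,\lambda}-u\,FG_{n,\lambda}^{(k)}(x,u) =(1-u)\,n\sum_{m=0}^{n-1}\frac{\binom{n-1}{m}}{m+1}\sum_{j=1}^{m+1}\frac{(1)_{j,\lambda}}{j^{k-1}}S_{1,\lambda}(m+1,j)\,(x)_{n-1-m,\lambda}. \]
   Context: All generating functions are formal power series in $t$. For $z\in\mathbb{C}$: $(z)_{0,\lambda}=1$ and $(z)_{n,\lambda}=z(z-\lambda)\cdots(z-(n-1)\lambda)$ for $n\ge1$. The degenerate exponential is $e_\lambda^{z}(t)=(1+\lambda t)^{z/\lambda}=\sum_{n\ge0}(z)_{n,\lambda}\frac{t^n}{n!}$, and $e_\lambda(t)=e_\lambda^{1}(t)$. Also $\log_\lambda(1+t)=\frac{1}{\lambda}\big((1+t)^\lambda-1\big)$. The degenerate Stirling numbers of the first kind are defined by $\frac{1}{j!}(\log_\lambda(1+t))^j=\sum_{n\ge j}S_{1,\lambda}(n,j)\frac{t^n}{n!}$. The modified degenerate polyexponential function is $\mathrm{Ei}_{k,\lambda}(x)=\sum_{n\ge1}\frac{(1)_{n,\lambda}}{n^k(n-1)!}x^n$. The degenerate poly-Frobenius-Genocchi polynomials are defined by $\sum_{n\ge0}FG_{n,\lambda}^{(k)}(x,u)\frac{t^n}{n!}=\frac{(1-u)\,\mathrm{Ei}_{k,\lambda}(\log_\lambda(1+t))}{e_\lambda(t)-u}e_\lambda^{x}(t)$.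 *)

(* Defs.v *)
From HB Require Import structures.
From mathcomp Require Import all_boot all_order all_algebra.
From mathcomp Require Import reals.
From mathcomp Require Import complex.
Set Implicit Arguments. Unset Strict Implicit. Unset Printing Implicit Defensive.
Import Order.TTheory GRing.Theory Num.Theory.
Local Open Scope ring_scope.

(* Formal power series over a field F, represented by their (ordinary)
   coefficient sequences: A represents sum_n A n t^n. *)
Section FPS.
Variable F : fieldType.
Definition fps := nat -> F.

Definition fps_one : fps := fun n => (n == 0%N)%:R.
Definition fps_const (c : F) : fps := fun n => if n == 0%N then c else 0.
Definition fps_add (A B : fps) : fps := fun n => A n + B n.
Definition fps_sub (A B : fps) : fps := fun n => A n - B n.
Definition fps_scale (c : F) (A : fps) : fps := fun n => c * A n.
Definition fps_mul (A B : fps) : fps :=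
  fun n => \sum_(i < n.+1) A i * B (n - i)%N.
Definition fps_pow (A : fps) (j : nat) : fps := iter j (fps_mul A) fps_one.
(* composition A(G(t)), meaningful when G 0 = 0 (then only j <= n contribute) *)
Definition fps_comp (A G : fps) : fps :=
  fun n => \sum_(j < n.+1) A j * fps_pow G j n.
(* multiplicative inverse, for A 0 != 0:
   1/A = (1/a0) * sum_j (-G)^j  where  A = a0 (1 + G),  G 0 = 0 *)
Definition fps_inv (A : fps) : fps :=
  fps_scale (A 0%N)^-1
    (fps_comp (fun j => (-1) ^+ j)
              (fun m => if m == 0%N then 0 else A m / A 0%N)).
Definition fps_div (A B : fps) : fps := fps_mul A (fps_inv B).
Definition egf (a : nat -> F) : fps := fun n => a n / (n`!)%:R.
End FPS.

Section Degenerate.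
Variable F : fieldType.

Definition dfall (z lam : F) (n : nat) : F := \prod_(i < n) (z - i%:R * lam).

Definition dexp (lam z : F) : fps F := egf (dfall z lam).

(* log_lam(1+t) = ((1+t)^lam - 1)/lam, with (1+t)^lam = sum_n (lam)_{n,1} t^n/n! *)
Definition dlog (lam : F) : fps F :=
  fun n => (dexp 1 lam n - (n == 0%N)%:R) / lam.

Definition dS1 (lam : F) (n j : nat) : F :=
  (n`!)%:R * (fps_pow (dlog lam) j n / (j`!)%:R).

Definition dEi (k : int) (lam : F) : fps F :=
  fun n => if n == 0%N then 0
           else dfall 1 lam n / ((n%:R) ^ k * ((n.-1)`!)%:R).

Definition dFG (k : int) (lam x u : F) (n : nat) : F :=
  (n`!)%:R *
  fps_div (fps_mul (fps_scale (1 - u) (fps_comp (dEi k lam) (dlog lam)))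
                   (dexp lam x))
          (fps_sub (dexp lam 1) (fps_const u)) n.
End Degenerate.

(* Main.v *)
Require Import Defs.
From HB Require Import structures.
From mathcomp Require Import all_boot all_order all_algebra.
From mathcomp Require Import reals.
From mathcomp Require Import complex.
From mathcomp Require Import ring.
Import Order.TTheory GRing.Theory Num.Theory.
Local Open Scope ring_scope.
Section FpsLemmas.
Variable F : fieldType.
Implicit Types (A B : fps F) (p q : {poly F}).

Definition agr n A p := forall m, (m <= n)%N -> A m = p`_m.
Definition tr n A : {poly F} := \poly_(i < n.+1) A i.

Lemma agr_tr n A : agr n A (tr n A).
Proof. by move=> m hm; rewrite coef_poly ltnS hm. Qed.

Lemma agr_mul n A B p q : agr n A p -> agr n B q -> agr n (fps_mul A B) (p * q).
Proof.
move=> hA hB m hm; rewrite /fps_mul coefM; apply: eq_bigr => i _.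
have h1 : (i <= n)%N := leq_trans (ltnSE (ltn_ord i)) hm.
have h2 : (m - i <= n)%N := leq_trans (leq_subr _ _) hm.
by rewrite hA // hB.
Qed.

Lemma agr_one n : agr n (fps_one F) 1.
Proof. by move=> m _; rewrite /fps_one coef1. Qed.

Lemma agr_pow n G p : agr n G p -> forall j, agr n (fps_pow G j) (p ^+ j).
Proof.
move=> hG; elim=> [|j IH]; first exact: agr_one.
by rewrite exprS; apply: agr_mul.
Qed.

Lemma coef_XpowM p q j m : p`_0 = 0 -> (m < j)%N -> (p ^+ j * q)`_m = 0.
Proof.
move=> p0 hm.
have -> : p = 'X * \poly_(i < size p) p`_i.+1.
  apply/polyP => i; rewrite coefXM; case: i => [|i] //=.
  rewrite coef_poly; case: ltnP => // hi.
  by rewrite nth_default // (leq_trans hi).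
by rewrite exprMn -mulrA coefXnM hm.
Qed.

Lemma coef_Xpow_small p j m : p`_0 = 0 -> (m < j)%N -> (p ^+ j)`_m = 0.
Proof. by move=> p0 hm; rewrite -[p ^+ j]mulr1 coef_XpowM.
Qed.

Lemma agr_ext n A B p : (forall m, (m <= n)%N -> A m = B m) -> agr n B p -> agr n A p.
Proof. by move=> e h m hm; rewrite e ?h. Qed.

Lemma coefNX p j m : ((- p) ^+ j)`_m = (-1) ^+ j * (p ^+ j)`_m.
Proof. by rewrite -scaleN1r exprZn coefZ. Qed.

Lemma fps_inv_agr n B : B 0%N != 0 ->
  let G := (fun m => if m == 0%N then 0 else B m / B 0%N) in
  agr n (fps_inv B) ((B 0%N)^-1 *: \sum_(j < n.+1) (- tr n G) ^+ j).
Proof.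
move=> hB G m hm.
rewrite /fps_inv /fps_scale /fps_comp coefZ; congr (_ * _).
rewrite coef_sum.
have hp0 : (tr n G)`_0 = 0 by rewrite coef_poly.
have hle : (m.+1 <= n.+1)%N by [].
rewrite (big_ord_widen n.+1 (fun j => (-1) ^+ j * fps_pow G j m) hle).
rewrite [RHS](bigID (fun j : 'I_n.+1 => (j < m.+1)%N)) /=.
rewrite [X in _ = _ + X]big1 ?addr0.
  apply: eq_bigr => j _.
  by rewrite (@agr_pow n G _ (agr_tr n G)) // coefNX.
move=> j; rewrite -leqNgt => hj.
by rewrite coefNX coef_Xpow_small ?mulr0.
Qed.

Lemma fps_div_mul n A B : B 0%N != 0 -> fps_mul (fps_div A B) B n = A n.
Proof.
move=> hB.
set b0 := B 0%N.
set G := (fun m => if m == 0%N then 0 else B m / b0).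
set P := tr n G.
set S : {poly F} := \sum_(j < n.+1) (- P) ^+ j.
have hP0 : P`_0 = 0 by rewrite coef_poly.
have aB : agr n B (b0%:P * (1 + P)).
  move=> m hm; rewrite coefCM coefD coef1 coef_poly ltnS hm /G.
  case: m hm => [|m] hm /=; first by rewrite addr0 mulr1.
  by rewrite add0r mulrC divfK.
have aI : agr n (fps_inv B) (b0^-1 *: S) := @fps_inv_agr n B hB.
have aD := @agr_mul n _ _ _ _ (agr_tr n A) aI.
have aM := @agr_mul n _ _ _ _ aD aB.
rewrite /fps_div (aM n (leqnn n)).
have e : b0^-1%:P * b0%:P = 1 :> {poly F} by rewrite -polyCM mulVf.
have h := subrX1 (- P) n.+1; rewrite -/S in h.
have eS : S * (1 + P) = 1 - (- P) ^+ n.+1.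
  have h' : (- P) ^+ n.+1 = 1 - S * (1 + P).
    by rewrite -[(- P) ^+ _](subrK 1) h; ring.
  rewrite h'; ring.
have -> : tr n A * (b0^-1 *: S) * (b0%:P * (1 + P)) = tr n A * (S * (1 + P)).
  rewrite -mul_polyC.
  transitivity (tr n A * (b0^-1%:P * b0%:P) * (S * (1 + P))); first by ring.
  by rewrite e mulr1.
rewrite eS mulrBr mulr1 coefB mulrC coef_XpowM ?subr0 //; last first.
  by rewrite coefN hP0 oppr0.
by rewrite coef_poly ltnS leqnn.
Qed.
End FpsLemmas.
Section Main.
Variable F : numFieldType.

Lemma natn0 (m : nat) : (m.+1)%:R != 0 :> F.
Proof. by rewrite pnatr_eq0. Qed.
Lemma factn0 (m : nat) : (m`!)%:R != 0 :> F.
Proof. by rewrite pnatr_eq0 -lt0n fact_gt0. Qed.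

Lemma binF (n m : nat) : (m <= n)%N ->
  ('C(n, m))%:R = (n`!)%:R / ((m`!)%:R * ((n - m)`!)%:R) :> F.
Proof.
move=> h; rewrite -(bin_fact h) !natrM mulfK //.
by rewrite mulf_neq0 ?factn0.
Qed.

Variables (lam x u : F) (k : int).
Hypothesis hu : u != 1.

Let Bf := fps_sub (dexp lam 1) (fps_const u).
Let Af := fps_mul (fps_scale (1 - u) (fps_comp (dEi k lam) (dlog lam))) (dexp lam x).
Let D := fps_div Af Bf.

Lemma step1 n :
  \sum_(m < n.+1) ('C(n, m))%:R * dFG k lam x u m * dfall 1 lam (n - m)
    - u * dFG k lam x u n = (n`!)%:R * Af n.
Proof.
have hB : Bf 0%N != 0.
  rewrite /Bf /fps_sub /dexp /egf /fps_const /= /dfall big_ord0 divr1.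
  by rewrite subr_eq0 eq_sym.
rewrite -(@fps_div_mul _ n Af Bf hB) -/D /fps_mul.
rewrite /Bf /fps_sub /dexp /egf /fps_const.
under [X in _ = _ * X]eq_bigr => i _ do rewrite mulrBr.
have hs : \sum_(i < n.+1) D i * (if (n - i)%N == 0%N then u else 0) = D n * u.
  rewrite big_ord_recr /= subnn eqxx big1 ?add0r // => i _.
  by rewrite subn_eq0 leqNgt ltn_ord /= mulr0.
rewrite sumrB hs mulrBr; congr (_ - _); last first.
  by rewrite /dFG -/Bf -/Af -/D; ring.
rewrite mulr_sumr; apply: eq_bigr => i _.
rewrite /dFG -/Bf -/Af -/D.
rewrite binF -1?ltnS //.
by field; rewrite !factn0.
Qed.

Let C := fps_comp (dEi k lam) (dlog lam).

Lemma Ccoef m : C m.+1 * ((m.+1)`!)%:R =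
  \sum_(1 <= j < m.+2) (dfall 1 lam j / (j%:R) ^ (k - 1) * dS1 lam m.+1 j).
Proof.
rewrite /C /fps_comp big_ord_recl {1}/dEi eqxx mul0r add0r mulr_suml.
rewrite big_add1 big_mkord; apply: eq_bigr => j _.
rewrite lift0 /dEi /dS1.
have hk : (j.+1%:R : F) ^ k = (j.+1%:R) ^ (k - 1) * j.+1%:R.
  have hx : (j.+1%:R : F) \is a GRing.unit by rewrite unitfE natn0.
  by rewrite -[in LHS](subrK 1 k) (exprzDr hx) expr1z.
rewrite hk.
have e1 : (j.+1 == 0%N) = false by []. have e2 : (j.+1).-1 = j by [].
rewrite e1 e2 !factS !natrM.
by field; rewrite nat1r factn0 natn0 expfz_neq0 ?natn0.
Qed.

Lemma step2 n : (n`!)%:R * Af n =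
  (1 - u) * n%:R *
    \sum_(m < n) (('C(n.-1, m))%:R / (m.+1)%:R *
       \sum_(1 <= j < m.+2)
          (dfall 1 lam j / (j%:R) ^ (k - 1) * dS1 lam m.+1 j)
       * dfall x lam (n.-1 - m)).
Proof.
case: n => [|N].
  rewrite mulr0 mul0r /Af /fps_mul big_ord1 /fps_scale /fps_comp big_ord1.
  by rewrite /dEi eqxx !mul0r mulr0 !mul0r mulr0.
rewrite /Af /fps_mul big_ord_recl -/C /fps_scale.
rewrite {1}/C /fps_comp big_ord1 {1}/dEi eqxx !mul0r mulr0 mul0r add0r.
rewrite /= !mulr_sumr; apply: eq_bigr => m _.
have eb : bump 0 m = m.+1 by rewrite /bump leq0n.
rewrite eb subSS /dexp /egf.
rewrite -[C m.+1](mulfK (factn0 m.+1)) Ccoef.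
rewrite binF -1?ltnS // !factS !natrM.
rewrite -mulr_suml.
set S := \sum_(1 <= j < m.+2) _.
by field; rewrite nat1r natn0 !factn0.
Qed.

Lemma mainF n :
  \sum_(m < n.+1) ('C(n, m))%:R * dFG k lam x u m * dfall 1 lam (n - m)
    - u * dFG k lam x u n
  = (1 - u) * n%:R *
    \sum_(m < n) (('C(n.-1, m))%:R / (m.+1)%:R *
       \sum_(1 <= j < m.+2)
          (dfall 1 lam j / (j%:R) ^ (k - 1) * dS1 lam m.+1 j)
       * dfall x lam (n.-1 - m)).
Proof. by rewrite step1 step2. Qed.
End Main.

Local Open Scope complex_scope.

Theorem theorem2 (R : realType) (lam : R) (k : int) (u : R[i]) (x : R) :
  lam != 0 -> u != 1 -> forall n : nat,
  \sum_(m < n.+1) ('C(n, m))%:R * dFG k lam%:C x%:C u m * dfall 1 lam%:C (n - m)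
    - u * dFG k lam%:C x%:C u n
  = (1 - u) * n%:R *
    \sum_(m < n) (('C(n.-1, m))%:R / (m.+1)%:R *
       \sum_(1 <= j < m.+2)
          (dfall 1 lam%:C j / (j%:R) ^ (k - 1) * dS1 lam%:C m.+1 j)
       * dfall x%:C lam%:C (n.-1 - m)).
Proof.
move=> _ hu n.
exact: (@mainF _ lam%:C x%:C u k hu n).
Qed.
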